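(* The set $S_Z$ is empty.
   Context: All graphs are finite and simple. A graph $G$ is a minimal prime graph complement if $G$ has at least $2$ vertices and: (1) the complement $\overline{G}$ is connected; (2) $G$ is triangle-free; (3) $G$ is $3$-colorable; (4) for any two distinct nonadjacent vertices $u,v$ of $G$, adding the edge $uv$ to $G$ yields a graph that either contains a triangle or is not $3$-colorable. Standing setup: $\Gamma$ is a minimal prime graph complement with a vertex $X$ of degree $2$, whose two neighbors are $A$ and $B$. Among the vertices of $\Gamma$ other than $X,A,B$: $S_A$ is the set of those adjacent to $A$ but not $B$; $S_B$ the set of those adjacent to $B$ but not $A$; $S_Y$ the set of those adjacent to both $A$ and $B$; $S_Z$ the set of those adjacent to neither $A$ nor $B$. *)

(* Defs.v *)
From mathcomp Require Import all_boot.
Set Implicit Arguments. Unset Strict Implicit. Unset Printing Implicit Defensive.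

Definition simple_graph (T : finType) (e : rel T) : Prop :=
  symmetric e /\ irreflexive e.

Definition compl_rel (T : finType) (e : rel T) : rel T :=
  fun x y => (x != y) && ~~ e x y.

Definition compl_connected (T : finType) (e : rel T) : Prop :=
  forall x y : T, connect (compl_rel e) x y.

Definition triangle_free (T : finType) (e : rel T) : Prop :=
  forall x y z : T, ~ [&& e x y, e y z & e x z].

Definition three_colorable (T : finType) (e : rel T) : Prop :=
  exists c : T -> 'I_3, forall x y : T, e x y -> c x != c y.

Definition add_edge (T : finType) (e : rel T) (u v : T) : rel T :=
  fun x y => [|| e x y, (x == u) && (y == v) | (x == v) && (y == u)].

Definition minimal_prime_graph_complement (T : finType) (e : rel T) : Prop :=
  [/\ 2 <= #|T|,
      compl_connected e,
      triangle_free e,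
      three_colorable e &
      forall u v : T, u != v -> ~~ e u v ->
        ~ triangle_free (add_edge e u v) \/ ~ three_colorable (add_edge e u v)].

Definition S_Z (T : finType) (e : rel T) (X A B : T) : {set T} :=
  [set v | [&& v != X, v != A, v != B, ~~ e v A & ~~ e v B]].

(* Main.v *)
Require Import Defs.
From mathcomp Require Import all_boot.

Lemma add_edge_cases (T : finType) (e : rel T) u v x y :
  add_edge e u v x y -> [\/ e x y, (x = u /\ y = v) | (x = v /\ y = u)].
Proof.
rewrite /add_edge => /or3P [H|/andP[/eqP-> /eqP->]|/andP[/eqP-> /eqP->]].
- by constructor 1.
- by constructor 2.
- by constructor 3.
Qed.

Lemma tf_add (T : finType) (e : rel T) u v :
  simple_graph e -> triangle_free e -> u != v ->
  (forall w, e u w || e w u -> e v w || e w v -> False) ->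
  triangle_free (add_edge e u v).
Proof.
move=> [Hsym Hirr] Htf Huv Hc x y z /and3P [H1 H2 H3].
case/add_edge_cases: H1 => [H1|[? ?]|[? ?]];
case/add_edge_cases: H2 => [H2|[? ?]|[? ?]];
case/add_edge_cases: H3 => [H3|[? ?]|[? ?]]; subst;
try by rewrite eqxx in Huv.
all: try by rewrite Hirr in H1.
all: try by rewrite Hirr in H2.
all: try by rewrite Hirr in H3.
all: try by apply: (Htf x y z); rewrite H1 H2 H3.
all: try first [ by apply: (Hc x); rewrite ?H1 ?H2 ?H3 ?orbT
           | by apply: (Hc y); rewrite ?H1 ?H2 ?H3 ?orbT
           | by apply: (Hc z); rewrite ?H1 ?H2 ?H3 ?orbT ].
Qed.
Lemma three (i a b k : 'I_3) : a != b -> a != k -> b != k ->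
  [\/ i = a, i = b | i = k].
Proof.
move: i a b k.
do 4 (case => [[|[|[|?]]] ?] //=); move=> *;
  try (by constructor 1; apply: val_inj);
  try (by constructor 2; apply: val_inj);
  try (by constructor 3; apply: val_inj).
Qed.

Lemma third (i j : 'I_3) : exists m : 'I_3, m != i /\ m != j.
Proof.
move: i j.
do 2 (case => [[|[|[|?]]] ?] //=).
all: first [ by exists (@Ordinal 3 0 isT) | by exists (@Ordinal 3 1 isT) | by exists (@Ordinal 3 2 isT)].
Qed.

Theorem lemma10 (T : finType) (e : rel T) (X A B : T) :
  simple_graph e ->
  minimal_prime_graph_complement e ->
  A != B ->
  [set y | e X y] = [set A; B] ->
  S_Z e X A B = set0.
Proof.
move=> Hs [Hcard Hcc Htf [c Hc] Hmax] AB HX.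
have [Hsym Hirr] := Hs.
have eX : forall y, e X y = (y == A) || (y == B).
  by move=> y; have := congr1 (fun S : {set T} => y \in S) HX; rewrite !inE.
have eXA : e X A by rewrite eX eqxx.
have eXB : e X B by rewrite eX eqxx orbT.
have XA : X != A by apply/eqP => E; rewrite E Hirr in eXA.
have XB : X != B by apply/eqP => E; rewrite E Hirr in eXB.
have nAB : ~~ e A B.
  by apply/negP => H; apply: (Htf X A B); rewrite eXA H eXB.
have Hno : forall u, u != X -> u != A -> u != B -> ~~ e u A -> ~~ e u B ->
    ~ three_colorable (add_edge e X u).
  move=> u uX uA uB nuA nuB Hcol.
  have nXu : ~~ e X u by rewrite eX (negbTE uA) (negbTE uB).
  have Xu : X != u by rewrite eq_sym.
  case: (Hmax X u Xu nXu) => H; apply: H => //.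
  apply: tf_add => // w H1 H2.
  have : e X w by case/orP: H1 => //; rewrite Hsym.
  rewrite eX => /orP [/eqP E|/eqP E]; subst w.
  - by move: H2; rewrite (Hsym A u) orbb (negbTE nuA).
  - by move: H2; rewrite (Hsym B u) orbb (negbTE nuB).
have col_add : forall u (d : T -> 'I_3), (forall x y, e x y -> d x != d y) ->
    d X != d u -> three_colorable (add_edge e X u).
  move=> u d Hd HXu; exists d => x y /add_edge_cases [H|[-> ->]|[-> ->]].
  - exact: Hd.
  - exact: HXu.
  - by rewrite eq_sym.
apply/setP => Z; rewrite /S_Z !inE.
apply/negbTE/negP => /and5P [ZX ZA ZB nZA nZB].
apply: (Hno Z ZX ZA ZB nZA nZB).
case: (eqVneq (c Z) (c X)) => cZX; last first.
  by apply: (col_add _ c) => //; rewrite eq_sym.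
have ka : c X != c A := Hc _ _ eXA.
have kb : c X != c B := Hc _ _ eXB.
case: (eqVneq (c A) (c B)) => cAB.
  have [m [mA mX]] := third (c A) (c X).
  pose d v := if v == X then m else c v.
  apply: (col_add _ d); last by rewrite /d eqxx (negbTE ZX) cZX.
  move=> x y Hxy; rewrite /d.
  case: (eqVneq x X) => [Ex|xX].
    subst x.
    have yX : y != X by apply/eqP => E; rewrite E Hirr in Hxy.
    move: Hxy; rewrite (negbTE yX) eX => /orP [/eqP->|/eqP->] //.
    by rewrite -cAB.
  case: (eqVneq y X) => [Ey|yX].
    subst y; move: Hxy; rewrite Hsym eX => /orP [/eqP->|/eqP->];
      rewrite eq_sym //; by rewrite -cAB.
  exact: Hc.
have Hfact : forall u, u != X -> u != A -> u != B -> c u != c X ->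
    e u A || e u B.
  move=> u uX uA uB cu; apply/negPn/negP; rewrite negb_or => /andP [nuA nuB].
  apply: (Hno u uX uA uB nuA nuB); apply: (col_add _ c) => //.
  by rewrite eq_sym.
set a := c A in ka cAB *; set b := c B in kb cAB *; set k := c X in ka kb cZX Hfact *.
have ak : a != k by rewrite eq_sym.
have bk : b != k by rewrite eq_sym.
pose d v := if c v == b then b else if c v == a then (if v == A then a else k)
            else (if e v B then k else if e v A then b else a).
apply: (col_add _ d); last first.
  rewrite /d cZX /k (negbTE kb) (negbTE ka) eXB.
  by rewrite (negbTE nZB) (negbTE nZA).
move=> x y Hxy.
have Hcxy := Hc x y Hxy.
have ba : b != a by rewrite eq_sym.
have ka' := ka; have kb' := kb.
have bad1 : forall x y, e x y -> c x = a -> x != A -> c y = k -> e y B -> False.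
  move=> x0 y0 H0 hx0 xA hy0 yB.
  have x0X : x0 != X by apply/eqP => E; subst x0; move: ak; rewrite /k hx0 eqxx.
  have x0B : x0 != B by apply/eqP => E; subst x0; move: ba; rewrite /b hx0 eqxx.
  have := Hfact x0 x0X xA x0B; rewrite hx0 => /(_ ak) /orP [H|H].
    by have := Hc _ _ H; rewrite hx0 -/a eqxx.
  by apply: (Htf x0 y0 B); rewrite H0 yB H.
have bad2 : forall x y, e x y -> c x = b -> c y = k -> ~~ e y B -> e y A -> False.
  move=> x0 y0 H0 hx0 hy0 yB yA.
  have x0X : x0 != X by apply/eqP => E; subst x0; move: bk; rewrite /k hx0 eqxx.
  have x0A : x0 != A by apply/eqP => E; subst x0; move: ba; rewrite /a hx0 eqxx.
  have x0B : x0 != B by apply/eqP => E; subst x0; by rewrite Hsym H0 in yB.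
  have := Hfact x0 x0X x0A x0B; rewrite hx0 => /(_ bk) /orP [H|H].
    by apply: (Htf x0 y0 A); rewrite H0 yA H.
  by have := Hc _ _ H; rewrite hx0 -/b eqxx.
have bad3 : forall x y, e x y -> x == A -> e y A = false -> False.
  by move=> x0 y0 H0 /eqP E; subst x0; rewrite Hsym H0.
rewrite /d.
case: (@three (c x) a b k cAB ak bk) => hx; case: (@three (c y) a b k cAB ak bk) => hy;
  rewrite hx hy in Hcxy *; rewrite ?eqxx in Hcxy => //;
  rewrite ?eqxx ?(negbTE cAB) ?(negbTE ba) ?(negbTE ak) ?(negbTE bk) ?(negbTE ka) ?(negbTE kb) //.
all: repeat case: ifP => ?.
all: rewrite ?eqxx ?(negbTE cAB) ?(negbTE ba) ?(negbTE ak) ?(negbTE bk) ?(negbTE ka) ?(negbTE kb) //.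
all: exfalso; have Hyx : e y x by rewrite Hsym.
- by apply: (bad3 x y Hxy).
- by apply: (bad1 x y Hxy) => //; apply/negbT.
- by apply: (bad2 x y Hxy) => //; apply/negbT.
- by apply: (bad1 y x Hyx) => //; apply/negbT.
- by apply: (bad3 y x Hyx).
- by apply: (bad2 y x Hyx) => //; apply/negbT.
Qed.
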